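(* Let $R$ be a real $d\times d$ matrix all of whose eigenvalues $\lambda$ satisfy $|\lambda|>1$, let $B\subset\mathbb{R}^d$ be finite with $\#B\ge2$, and let $\tau_b(x)=R^{-1}(x+b)$ for $b\in B$, so $\tau_b^{-1}(y)=Ry-b$. Then for every $x\in\mathbb{R}^d$ and $n\in\mathbb{N}$, the set $\{\tau_{\omega_n}^{-1}\cdots\tau_{\omega_1}^{-1}x:\omega_1,\dots,\omega_n\in B\}$ has at least $n$ elements, and the set $\{\tau_{\omega_n}\cdots\tau_{\omega_1}x:\omega_1,\dots,\omega_n\in B\}$ has at least $n$ elements. *)

(* Defs.v *)
From HB Require Import structures.
From mathcomp Require Import all_boot all_order all_algebra.
From mathcomp Require Import finmap.
From mathcomp Require Import complex.
From mathcomp Require Import reals.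
Set Implicit Arguments. Unset Strict Implicit. Unset Printing Implicit Defensive.
Import Order.TTheory GRing.Theory Num.Theory.
Local Open Scope ring_scope.

Definition cplx_eigenvalue (R : realType) (d : nat) (M : 'M[R]_d) (z : R[i]) : Prop :=
  root (map_poly (fun r : R => (r%:C)%C) (char_poly M)) z.

Definition tau (R : realType) (d : nat) (M : 'M[R]_d) (b x : 'cV[R]_d) : 'cV[R]_d :=
  invmx M *m (x + b).
Definition tau_inv (R : realType) (d : nat) (M : 'M[R]_d) (b y : 'cV[R]_d) : 'cV[R]_d :=
  M *m y - b.

(* tau_{w_n} o ... o tau_{w_1} x for w = [:: w_1; ...; w_n] (w_1 applied first) *)
Definition tau_word (R : realType) (d : nat) (M : 'M[R]_d) (w : seq 'cV[R]_d) (x : 'cV[R]_d) :=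
  foldl (fun y b => tau M b y) x w.
Definition tau_inv_word (R : realType) (d : nat) (M : 'M[R]_d) (w : seq 'cV[R]_d) (x : 'cV[R]_d) :=
  foldl (fun y b => tau_inv M b y) x w.

(* Main.v *)
Require Import Defs.
From HB Require Import structures.
From mathcomp Require Import all_boot all_order all_algebra.
From mathcomp Require Import finmap.
From mathcomp Require Import complex.
From mathcomp Require Import reals.
Import Order.TTheory GRing.Theory Num.Theory.
Local Open Scope ring_scope.
Local Open Scope fset_scope.

Lemma translate_grow (R : numFieldType) (V : lmodType R) (A : {fset V}) (u : V) :
  u != 0 -> A != fset0 -> (#|`A| < #|` A `|` [fset (a + u)%R | a in A]|)%N.
Proof.
move=> hu hA.
set C := [fset (a + u)%R | a in A].
have injt : injective (fun a : V => (a + u)%R) by move=> a b; apply: GRing.addIr.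
have cC : #|` C| = #|` A| by rewrite /C card_in_imfset //; move=> a b _ _; apply: injt.
rewrite ltn_neqAle fsubset_leq_card ?fsubsetUl // andbT.
apply/negP => /eqP hAC.
have eAC : A == A `|` C by rewrite -(fsubset_leqif_cards (fsubsetUl A C)).2 hAC.
have sub : A `|` C `<=` A by rewrite -(eqP eAC) fsubset_refl.
have CA : C = A.
  apply/eqP; rewrite eqEfcard cC leqnn andbT.
  by apply: fsubset_trans sub; rewrite fsubsetUr.
have hs : \sum_(j <- C) j = \sum_(j <- A) j by rewrite CA.
move: hs; rewrite /C big_imfset /=; last by move=> a b _ _; apply: injt.
rewrite big_split /= big_const_seq count_predT iter_addr addr0.
move/eqP; rewrite -subr_eq0 addrAC subrr add0r. rewrite -scaler_nat scaler_eq0 pnatr_eq0 (negbTE hu) orbF.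
by rewrite -cardfs_gt0 lt0n in hA; rewrite (negbTE hA).
Qed.


Definition WS {R : numFieldType} {V : lmodType R} (B : {fset V}) (F : V -> V -> V) (x : V) (n : nat) :=
  [fset foldl (fun y b => F b y) x (map val (tval (w : n.-tuple B))) | w : n.-tuple B].

Lemma grow_gen (R : numFieldType) (V : lmodType R) (B : {fset V}) (F : V -> V -> V) (x : V)
  (hinj : forall b, injective (F b)) (b1 b2 : V) (hb1 : b1 \in B) (hb2 : b2 \in B)
  (u : V) (hu : u != 0) (hF : forall y, F b2 y = (F b1 y + u)%R) n :
  (n < #|` WS B F x n|)%N.
Proof.
elim: n => [|n IH].
  rewrite cardfs_gt0; apply/fset0Pn; exists x.
  by apply/imfsetP; exists [tuple].
set S := WS B F x n.
have neS : S != fset0 by rewrite -cardfs_gt0; apply: leq_ltn_trans IH.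
have c1 : #|` F b1 @` S| = #|` S| by rewrite card_in_imfset //; move=> a b _ _; apply: hinj.
have e2 : F b2 @` S = [fset (a + u)%R | a in F b1 @` S].
  apply/fsetP => z; apply/imfsetP/imfsetP => [[y yS ->]|[a /imfsetP[y yS ->] ->]].
    by exists (F b1 y); [apply: in_imfset | rewrite hF].
  by exists y => //; rewrite hF.
have sub : F b1 @` S `|` F b2 @` S `<=` WS B F x n.+1.
  apply/fsubsetP => z; rewrite in_fsetU => /orP[] /imfsetP[y /imfsetP[w _ ->] ->].
    apply/imfsetP; exists [tuple of rcons (tval w) [` hb1]] => //=.
    by rewrite map_rcons foldl_rcons.
  apply/imfsetP; exists [tuple of rcons (tval w) [` hb2]] => //=.
  by rewrite map_rcons foldl_rcons.
apply: leq_trans (fsubset_leq_card sub).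
apply: (leq_ltn_trans IH); rewrite e2 -c1; apply: translate_grow => //.
by rewrite -cardfs_gt0 c1 cardfs_gt0.
Qed.

Theorem lemma6p5 (R : realType) (d : nat) (M : 'M[R]_d)
  (hM : forall z : R[i], cplx_eigenvalue M z -> 1 < `|z|)
  (B : {fset 'cV[R]_d}) (hB : (2 <= #|` B|)%N)
  (x : 'cV[R]_d) (n : nat) :
  (n <= #|` [fset tau_inv_word M (map val (tval (w : n.-tuple B))) x | w : n.-tuple B] |)%N /\
  (n <= #|` [fset tau_word M (map val (tval (w : n.-tuple B))) x | w : n.-tuple B] |)%N.
Proof.
have uM : M \in unitmx.
  rewrite unitmxE unitfE; apply/negP => /eqP d0.
  suff /hM : cplx_eigenvalue M 0 by rewrite normr0 ltr10.
  rewrite /cplx_eigenvalue /root horner_coef0 coef_map_id0 //.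
  by rewrite char_poly_det d0 mulr0.
have [b1 hb1] : exists b1, b1 \in B.
  by apply/fset0Pn; rewrite -cardfs_gt0; apply: leq_trans hB.
have [b2 hb2] : exists b2, b2 \in B `\ b1.
  apply/fset0Pn; rewrite -cardfs_gt0.
  by move: hB; rewrite (cardfsD1 b1) hb1.
move: hb2; rewrite in_fsetD1 => /andP[n21 hb2].
have u0 : (b1 - b2 != 0)%R by rewrite subr_eq0 eq_sym.
split; apply: ltnW.
- apply: (@grow_gen _ _ B (tau_inv M) x _ b1 b2 hb1 hb2 (b1 - b2)%R u0).
    move=> b y z; rewrite /tau_inv => /addIr e.
    by rewrite -(mulKmx uM y) e mulKmx.
  by move=> y; rewrite /tau_inv addrA subrK.
- apply: (@grow_gen _ _ B (tau M) x _ b1 b2 hb1 hb2 (invmx M *m (b2 - b1))%R).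
  + move=> b y z; rewrite /tau => e.
    by apply: (addIr b); rewrite -(mulKVmx uM (y + b)%R) e mulKVmx.
  + apply/negP => /eqP e.
    have : (b2 - b1 = 0)%R by rewrite -(mulKVmx uM (b2 - b1)) e mulmx0.
    by move/eqP; rewrite subr_eq0 (negbTE n21).
  + by move=> y; rewrite /tau -mulmxDr [(b2 - b1)%R]addrC addrA addrK.
Qed.
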